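(* Let $L$ and $M$ be Euclidean lattices normalized so that $\mu_{\max}(L)=\mu_{\max}(M)=0$, and let $\alpha\in L\otimes M$. Then $|\alpha|\ge \sqrt{l(\alpha)}$.
   Context: A Euclidean lattice $L$ of rank $n$ is a discrete subgroup of rank $n$ spanning an $n$-dimensional real inner product space $L_{\mathbb{R}}$; $\deg(L)=-\log\mathrm{vol}(L_{\mathbb{R}}/L)$, $\mu(L)=\deg(L)/\operatorname{rk}(L)$. A sublattice is a subgroup with the induced inner product on its real span. $\mu_{\max}(M)=\max\{\mu(S): S\subseteq M \text{ a nonzero sublattice}\}$. The lattice $L\otimes M\subset L_{\mathbb{R}}\otimes M_{\mathbb{R}}$ has inner product $(v\otimes w,v'\otimes w')=(v,v')(w,w')$, and $|\alpha|$ denotes the norm. The length $l(\alpha)$ of $\alpha\in L\otimes M$ is the minimal integer $l\ge 0$ such that $\alpha=\sum_{k=1}^{l}u_k\otimes u_k'$ with $u_k\in L$, $u_k'\in M$. *)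

(* Defs.v *)
From HB Require Import structures.
From mathcomp Require Import all_boot all_order all_algebra.
From mathcomp Require Import reals exp.
Set Implicit Arguments. Unset Strict Implicit. Unset Printing Implicit Defensive.
Import Order.TTheory GRing.Theory Num.Theory.
Local Open Scope ring_scope.

Section Lattices.
Variable R : realType.

Definition intmx (p q : nat) (A : 'M[int]_(p, q)) : 'M[R]_(p, q) :=
  map_mx (fun z : int => z%:~R) A.

(* A Euclidean lattice of rank n in R^N (standard inner product) given by a
   basis: the rows of B, which must be linearly independent. *)
Definition euclidean_lattice (n N : nat) (B : 'M[R]_(n, N)) : Prop := row_free B.

Definition in_lattice (n N : nat) (B : 'M[R]_(n, N)) (v : 'rV[R]_N) : Prop :=
  exists z : 'rV[int]_n, v = intmx z *m B.

(* S (rows = a basis) spans a nonzero sublattice of L; every nonzero subgroup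
   of L is free and arises this way. *)
Definition sublattice (n N : nat) (B : 'M[R]_(n, N)) (r : nat) (S : 'M[R]_(r, N))
  : Prop :=
  (0 < r)%N /\ row_free S /\ (forall i, in_lattice B (row i S)).

(* deg = - log covol, covol = sqrt (det Gram) *)
Definition lat_deg (r N : nat) (S : 'M[R]_(r, N)) : R :=
  - (ln (\det (S *m S^T)) / 2).

Definition lat_slope (r N : nat) (S : 'M[R]_(r, N)) : R := lat_deg S / r%:R.

Definition is_mu_max (n N : nat) (B : 'M[R]_(n, N)) (x : R) : Prop :=
  (exists r (S : 'M[R]_(r, N)), sublattice B S /\ lat_slope S = x) /\
  (forall r (S : 'M[R]_(r, N)), sublattice B S -> lat_slope S <= x).

(* R^N (x) R^K is identified with N x K matrices, v (x) w |-> v^T w;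
   the tensor inner product is then the Frobenius inner product. *)
Definition in_tensor (n N m K : nat) (B : 'M[R]_(n, N)) (C : 'M[R]_(m, K))
  (a : 'M[R]_(N, K)) : Prop :=
  exists A : 'M[int]_(n, m), a = B^T *m intmx A *m C.

Definition tnorm (N K : nat) (a : 'M[R]_(N, K)) : R :=
  Num.sqrt (\sum_(i < N) \sum_(j < K) a i j ^+ 2).

Definition decomposable (n N m K : nat) (B : 'M[R]_(n, N)) (C : 'M[R]_(m, K))
  (a : 'M[R]_(N, K)) (l : nat) : Prop :=
  exists (u : 'I_l -> 'rV[R]_N) (w : 'I_l -> 'rV[R]_K),
    (forall k, in_lattice B (u k)) /\ (forall k, in_lattice C (w k)) /\
    a = \sum_(k < l) (u k)^T *m w k.

Definition is_length (n N m K : nat) (B : 'M[R]_(n, N)) (C : 'M[R]_(m, K))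
  (a : 'M[R]_(N, K)) (l : nat) : Prop :=
  decomposable B C a l /\ (forall l', decomposable B C a l' -> (l <= l')%N).

End Lattices.

(* Main.v *)
Require Import Defs.
From HB Require Import structures.
From mathcomp Require Import all_boot all_order all_algebra.
From mathcomp Require Import reals exp.
Set Implicit Arguments. Unset Strict Implicit. Unset Printing Implicit Defensive.
Import Order.TTheory GRing.Theory Num.Theory.
Local Open Scope ring_scope.

Lemma sqnorm_gt0 (R : rcfType) (K : nat) (v : 'rV[R]_K) : v != 0 -> 0 < (v *m v^T) 0 0.
Proof.
move=> vn0; rewrite mxE lt_def; apply/andP; split; last first.
  by apply: sumr_ge0 => j _; rewrite mxE -expr2 sqr_ge0.
apply/eqP => h0; move/eqP: vn0; apply; apply/matrixP => i j.
rewrite ord1 mxE.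
have nn : forall k, xpredT k -> 0 <= v 0 k * v^T k 0.
  by move=> k _; rewrite mxE -expr2 sqr_ge0.
have := @psumr_eq0P R _ xpredT (fun j => v 0 j * v^T j 0) nn h0 j isT.
rewrite mxE -expr2 => /eqP; rewrite sqrf_eq0 => /eqP.
by [].
Qed.

Lemma sq_decomp (R : comNzRingType) (r K : nat) (v : 'rV[R]_K) (c : 'rV[R]_r)
  (F1 : 'M[R]_(r, K)) : F1 *m v^T = 0 -> F1 *m F1^T = 1%:M ->
  (v + c *m F1) *m (v + c *m F1)^T = v *m v^T + c *m c^T.
Proof.
move=> F1v eF1.
rewrite linearD /= mulmxDr !mulmxDl trmx_mul -(mulmxA c F1) F1v mulmx0 addr0.
have -> : v *m (F1^T *m c^T) = 0.
  by rewrite mulmxA -(trmxK v) -trmx_mul F1v trmx0 mul0mx.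
by rewrite add0r -(mulmxA c) (mulmxA F1) eF1 mul1mx.
Qed.

Lemma LQ (R : rcfType) (r K : nat) (H : 'M[R]_(r, K)) : row_free H ->
  exists (S : 'M[R]_r) (F : 'M[R]_(r, K)),
    [/\ H = S *m F, F *m F^T = 1%:M, \det S != 0 &
        \det S ^+ 2 <= \prod_i (H *m H^T) i i].
Proof.
elim: r H => [|r IH] H frH.
  exists 1%:M, 0; split.
  - by apply/matrixP => -[].
  - by apply/matrixP => [[]].
  - by rewrite det1 oner_eq0.
  - by rewrite det1 big_ord0 expr1n.
pose H' : 'M_(1 + r, K) := H.
suff [S [F hSF]] : exists (S : 'M_(1 + r)) (F : 'M_(1 + r, K)),
  [/\ H' = S *m F, F *m F^T = 1%:M, \det S != 0 &
       \det S ^+ 2 <= \prod_(i < 1 + r) (H' *m H'^T) i i].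
  by exists S, F.
have defH : H' = col_mx (usubmx H') (dsubmx H') by rewrite vsubmxK.
set h := usubmx H' in defH; set H1 := dsubmx H' in defH.
have frH1 : row_free H1.
  apply: inj_row_free => v vH1.
  have : row_mx 0 v *m H' = 0 by rewrite defH mul_row_col mul0mx add0r.
  move/eqP; rewrite mulmx_free_eq0 //.
  by rewrite row_mx_eq0 => /andP[_ /eqP].
have [S1 [F1 [eH1 eF1 dS1 hS1]]] := IH H1 frH1.
have uS1 : S1 \in unitmx by rewrite unitmxE unitfE.
pose c := h *m F1^T.
pose v := h - c *m F1.
have vn0 : v != 0.
  apply/eqP => v0.
  have : row_mx 1 (- (c *m invmx S1)) *m H' = 0.
    rewrite defH mul_row_col mul1mx mulNmx eH1 -!mulmxA (mulmxA (invmx S1)).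
    by rewrite mulVmx // mul1mx mulmxA; apply: v0.
  move/eqP; rewrite mulmx_free_eq0 // row_mx_eq0 => /andP[/eqP /matrixP/(_ 0 0)].
  by rewrite !mxE /= => /eqP; rewrite oner_eq0.
pose nv2 := (v *m v^T) 0 0.
have nv2_gt0 : 0 < nv2 by apply: sqnorm_gt0.
pose nu := Num.sqrt nv2.
have nu_gt0 : 0 < nu by rewrite sqrtr_gt0.
have nu2 : nu ^+ 2 = nv2 by rewrite sqr_sqrtr // ltW.
pose f := nu^-1 *: v.
have F1v : F1 *m v^T = 0.
  rewrite /v linearB /= trmx_mul mulmxBr mulmxA eF1 mul1mx /c trmx_mul trmxK.
  by rewrite subrr.
exists (block_mx (nu%:M : 'M_1) c 0 S1), (col_mx f F1); split.
- rewrite defH mul_block_col mul0mx add0r -eH1.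
  congr col_mx; rewrite mul_scalar_mx /f scalerA mulfV ?gt_eqF // scale1r /v.
  by rewrite subrK.
- rewrite tr_col_mx mul_col_row eF1 (scalar_mx_block 1 r).
  have -> : F1 *m f^T = 0 by rewrite /f linearZ /= -scalemxAr F1v scaler0.
  have -> : f *m F1^T = 0 by rewrite -(trmxK (f *m F1^T)) trmx_mul trmxK /f linearZ /= -scalemxAr F1v scaler0 linear0.
  congr block_mx; rewrite /f linearZ /= -scalemxAr -scalemxAl scalerA.
  rewrite -expr2 (mx11_scalar (v *m v^T)) -/nv2 -nu2 -scalemx1 scalerA.
  by rewrite -exprMn mulVf ?gt_eqF // expr1n scale1r.
- by rewrite det_ublock det_scalar1 mulf_neq0 // gt_eqF.
- rewrite det_ublock det_scalar1 exprMn nu2.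
  rewrite big_ord_recl.
  have -> : (H' *m H'^T) ord0 ord0 = (h *m h^T) 0 0.
    rewrite defH tr_col_mx mul_col_row.
    have -> : (ord0 : 'I_(1+r)) = lshift r (0 : 'I_1) by apply/val_inj.
    by rewrite block_mxEul.
  have -> : \prod_(i < r) (H' *m H'^T) (lift ord0 i) (lift ord0 i) =
            \prod_(i < r) (H1 *m H1^T) i i.
    apply: eq_bigr => i _.
    rewrite defH tr_col_mx mul_col_row.
    have -> : lift ord0 i = rshift 1 i :> 'I_(1 + r) by apply/val_inj.
    by rewrite block_mxEdr.
  apply: ler_pM => //; first by rewrite ltW.
    by rewrite exprn_even_ge0.
  have eh : h = v + c *m F1 by rewrite /v subrK.
  rewrite eh sq_decomp // mxE [X in _ <= _ + X]mxE -/nv2 lerDl.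
  by apply: sumr_ge0 => j _; rewrite !mxE -expr2 sqr_ge0.
Qed.

Lemma ln_prod (R : realType) (r : nat) (x : 'I_r -> R) :
  (forall i, 0 < x i) -> ln (\prod_i x i) = \sum_i ln (x i).
Proof.
elim: r x => [|r IH] x xp; first by rewrite !big_ord0 ln1.
rewrite !big_ord_recr /= lnM ?IH //; rewrite ?posrE //.
by apply: prodr_gt0 => i _.
Qed.

Lemma amgm (R : realType) (r : nat) (x : 'I_r -> R) :
  (forall i, 0 <= x i) -> 1 <= \prod_i x i -> r%:R <= \sum_i x i.
Proof.
move=> x0 p1.
have xp : forall i, 0 < x i.
  move=> i; rewrite lt_def x0 andbT; apply/eqP => xi0.
  have : \prod_i x i == 0 by apply/prodf_eq0; exists i => //; rewrite xi0.
  by move/eqP => p0; move: p1; rewrite p0 ler10.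
have le : forall i, 1 + ln (x i) <= x i.
  move=> i; have := expR_ge1Dx (ln (x i)); rewrite lnK //; by rewrite posrE.
apply: (le_trans _ (ler_sum _ (fun i _ => le i))).
rewrite big_split /= sumr_const card_ord -ln_prod // lerDl.
by apply: ln_ge0.
Qed.

Lemma sumsq_tr (R : comNzRingType) (m n : nat) (A : 'M[R]_(m, n)) :
  \sum_i \sum_j A i j ^+ 2 = \tr (A *m A^T).
Proof.
rewrite /mxtrace; apply: eq_bigr => i _; rewrite mxE.
by apply: eq_bigr => j _; rewrite mxE expr2.
Qed.

Lemma gram_det (R : comNzRingType) (r N : nat) (T : 'M[R]_r) (E : 'M[R]_(r, N)) :
  E *m E^T = 1%:M -> \det ((T *m E) *m (T *m E)^T) = \det T ^+ 2.
Proof.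
move=> eE; rewrite trmx_mul mulmxA -(mulmxA T) eE mulmx1 det_mulmx det_tr.
by rewrite expr2.
Qed.

Lemma det_ge1 (R : realType) (r : nat) (T : 'M[R]_r) :
  \det T != 0 -> 0 <= ln (\det T ^+ 2) -> 1 <= \det T ^+ 2.
Proof.
move=> dT l0; rewrite leNgt; apply/negP => lt1.
have p : 0 < \det T ^+ 2 by rewrite exprn_even_gt0.
have : 0 < \det T ^+ 2 < 1 by rewrite p lt1.
by move/ln_lt0; rewrite ltNge l0.
Qed.

Lemma ANA (R : realType) (r N K : nat) (G : 'M[R]_(r, N)) (H : 'M[R]_(r, K)) :
  row_free G -> row_free H ->
  0 <= ln (\det (G *m G^T)) -> 0 <= ln (\det (H *m H^T)) ->
  r%:R <= \sum_i \sum_j (G^T *m H) i j ^+ 2.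
Proof.
move=> frG frH lG lH.
have [T [E [eG eE dT _]]] := LQ frG.
have [S [F [eH eF dS _]]] := LQ frH.
rewrite eG gram_det // in lG; rewrite eH gram_det // in lH.
have T1 := det_ge1 dT lG; have S1 := det_ge1 dS lH.
pose X := T^T *m S.
have dX : \det X = \det T * \det S by rewrite det_mulmx det_tr.
have X1 : 1 <= \det X ^+ 2 by rewrite dX exprMn mulr_ege1.
have frX : row_free X by rewrite row_free_unit unitmxE unitfE dX mulf_neq0.
have [S' [F' [eX eF' dS' hS']]] := LQ frX.
have eXX : \det X ^+ 2 = \det S' ^+ 2.
  rewrite -(gram_det S' eF') -eX det_mulmx det_tr.
  by rewrite det_mulmx det_tr dX expr2.
have hp : 1 <= \prod_i (X *m X^T) i i by rewrite (le_trans X1) // eXX.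
have nn : forall i, 0 <= (X *m X^T) i i.
  by move=> i; rewrite mxE; apply: sumr_ge0 => j _; rewrite !mxE -expr2 sqr_ge0.
have -> : \sum_i \sum_j (G^T *m H) i j ^+ 2 = \sum_i (X *m X^T) i i.
  rewrite sumsq_tr eG eH trmx_mul.
  have -> : E^T *m T^T *m (S *m F) = E^T *m X *m F by rewrite !mulmxA.
  have -> : (E^T *m X *m F) *m (E^T *m X *m F)^T = E^T *m ((X *m X^T) *m E).
    rewrite !trmx_mul trmxK -!mulmxA (mulmxA F) eF mul1mx.
    by rewrite trmxK.
  by rewrite (mxtrace_mulC (E^T)) -(mulmxA (X *m X^T)) eE mulmx1.
exact: amgm nn hp.
Qed.

Lemma intmxM (R : realType) p q s (A : 'M[int]_(p, q)) (B : 'M[int]_(q, s)) :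
  intmx R (A *m B) = intmx R A *m intmx R B.
Proof. by rewrite /intmx map_mxM. Qed.

Lemma intmx_tr (R : realType) p q (A : 'M[int]_(p, q)) :
  (intmx R A)^T = intmx R A^T.
Proof. by rewrite /intmx map_trmx. Qed.

Lemma intmxE (R : realType) p q (A : 'M[int]_(p, q)) i j :
  intmx R A i j = (A i j)%:~R.
Proof. by rewrite /intmx mxE. Qed.

Lemma intmx_unit (R : realType) p (A : 'M[int]_p) :
  A \in unitmx -> intmx R A \in unitmx.
Proof.
move=> uA; have dA : \det A != 0.
  by apply: contraTneq uA => h; rewrite unitmxE h unitr0.
by rewrite unitmxE unitfE /intmx det_map_mx intr_eq0.
Qed.

Lemma in_lattice_row (R : realType) r n N (X : 'M[int]_(r, n)) (B : 'M[R]_(n, N)) k :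
  in_lattice B (row k (intmx R X *m B)).
Proof. by exists (row k X); rewrite row_mul /intmx map_row. Qed.

Lemma indep_decomp (R : realType) n N m K (B : 'M[R]_(n, N)) (C : 'M[R]_(m, K))
  (A : 'M[int]_(n, m)) : row_free B -> row_free C ->
  exists r (G : 'M[R]_(r, N)) (H : 'M[R]_(r, K)),
    [/\ row_free G, row_free H, (forall k, in_lattice B (row k G)),
        (forall k, in_lattice C (row k H)) & B^T *m intmx R A *m C = G^T *m H].
Proof.
move=> frB frC.
have [Pm uP [Qm uQ [d _ eA]]] := int_Smith_normal_form A.
set D := \matrix_(i, j) _ in eA.
pose S := [set i : 'I_n | (i < m)%N && (d`_i != 0)].
pose e (k : 'I_#|S|) : 'I_n := enum_val k.
have eS : forall k, e k \in S by move=> k; apply: enum_valP.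
have e_inj : injective e by apply: enum_val_inj.
pose Mi : 'M[int]_(#|S|, n) := \matrix_(k, i) (d`_i *+ (i == e k)).
pose Ni : 'M[int]_(#|S|, m) := \matrix_(k, j) ((nat_of_ord j == nat_of_ord (e k))%:R).
have eD : D = Mi^T *m Ni.
  apply/matrixP => i j; rewrite !mxE.
  case: (boolP (i \in S)) => iS.
    have [k ek] : exists k, e k = i by exists (enum_rank_in iS i); apply: enum_rankK_in.
    rewrite (bigD1 k) //= big1 => [|k' nk']; last first.
      rewrite !mxE; have -> : (i == e k') = false.
        by apply/negbTE; rewrite -ek; apply: contra nk' => /eqP /e_inj ->.
      by rewrite mulr0n mul0r.
    rewrite !mxE ek eqxx mulr1n addr0 eq_sym.
    by case: (_ == _); rewrite ?mulr1 ?mulr0.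
  rewrite big1 => [|k _]; last first.
    rewrite !mxE; have -> : (i == e k) = false.
      by apply/negbTE; apply: contra iS => /eqP ->.
    by rewrite mulr0n mul0r.
  case: eqP => [eij|]; last by rewrite mulr0n.
  move: iS; rewrite inE eij ltn_ord /= negbK => /eqP ->.
  by rewrite mul0rn.
pose G := intmx R (Mi *m Pm^T) *m B.
pose H := intmx R (Ni *m Qm) *m C.
exists #|S|, G, H; split.
- apply/inj_row_free => v /eqP.
  rewrite /G mulmxA mulmx_free_eq0 // intmxM mulmxA => /eqP h.
  have uU : intmx R Pm^T \in unitmx by apply: intmx_unit; rewrite unitmx_tr.
  have hv : v *m intmx R Mi = 0.
    by rewrite -(mulmx1 (v *m intmx R Mi)) -(mulmxV uU) mulmxA h mul0mx.
  apply/matrixP => z k; rewrite ord1 mxE.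
  move/matrixP: hv => /(_ 0 (e k)); rewrite !mxE (bigD1 k) //= big1 => [|k' nk']; last first.
    rewrite intmxE mxE; have -> : (e k == e k') = false.
      by apply/negbTE; apply: contra nk' => /eqP /e_inj ->.
    by rewrite mulr0n mulr0.
  rewrite addr0 intmxE mxE eqxx mulr1n => /eqP; rewrite mulf_eq0 intr_eq0.
  have : e k \in S := eS k.
  by rewrite inE => /andP[_ /negbTE ->]; rewrite orbF => /eqP.
- apply/inj_row_free => v /eqP.
  rewrite /H mulmxA mulmx_free_eq0 // intmxM mulmxA => /eqP h.
  have uU : intmx R Qm \in unitmx by apply: intmx_unit.
  have hv : v *m intmx R Ni = 0.
    by rewrite -(mulmx1 (v *m intmx R Ni)) -(mulmxV uU) mulmxA h mul0mx.
  apply/matrixP => z k; rewrite ord1 mxE.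
  have ltk : (e k < m)%N by have := eS k; rewrite inE => /andP[].
  move/matrixP: hv => /(_ 0 (Ordinal ltk)); rewrite !mxE (bigD1 k) //= big1 => [|k' nk']; last first.
    rewrite intmxE mxE /=; have -> : (nat_of_ord (e k) == nat_of_ord (e k')) = false.
      by apply/negbTE; apply: contra nk' => /eqP /val_inj /e_inj ->.
    by rewrite mulr0.
  by rewrite addr0 intmxE mxE /= eqxx mulr1.
- by move=> k; apply: in_lattice_row.
- by move=> k; apply: in_lattice_row.
- rewrite eA eD /G /H trmx_mul intmx_tr trmx_mul trmxK !intmxM !mulmxA.
  by rewrite -intmx_tr.
Qed.

Lemma mulmx_rank1_sum (R : realType) r N K (G : 'M[R]_(r, N)) (H : 'M[R]_(r, K)) :
  G^T *m H = \sum_(k < r) (row k G)^T *m row k H.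
Proof.
apply/matrixP => i j; rewrite !mxE summxE; apply: eq_bigr => k _.
by rewrite !mxE big_ord1 !mxE.
Qed.

Unset Implicit Arguments.
Theorem proposition1 (R : realType) (n N m K : nat)
  (B : 'M[R]_(n, N)) (C : 'M[R]_(m, K)) (a : 'M[R]_(N, K)) (l : nat) :
  euclidean_lattice B -> euclidean_lattice C ->
  is_mu_max B 0 -> is_mu_max C 0 ->
  in_tensor B C a -> is_length B C a l ->
  Num.sqrt (l%:R) <= tnorm a.
Proof.
rewrite /euclidean_lattice => frB frC [_ hB] [_ hC] [A ->] [_ hmin].
have [r [G [H [frG frH rG rH ea]]]] := indep_decomp A frB frC.
have lr : (l <= r)%N.
  apply: hmin; exists (fun k => row k G), (fun k => row k H); split => //.
  by rewrite ea mulmx_rank1_sum.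
rewrite /tnorm ler_sqrt; last by apply: sumr_ge0 => i _; apply: sumr_ge0 => j _; rewrite sqr_ge0.
apply: (le_trans (y := r%:R)); first by rewrite ler_nat.
case: (posnP r) => [r0|r_gt0].
  by rewrite r0 sumr_ge0 // => i _; apply: sumr_ge0 => j _; rewrite sqr_ge0.
have lnpos : forall p (X : 'M[R]_(r, p)) q (Y : 'M[R]_(q, p)),
    (forall r' (S : 'M[R]_(r', p)), sublattice Y S -> lat_slope S <= 0) ->
    row_free X -> (forall k, in_lattice Y (row k X)) -> 0 <= ln (\det (X *m X^T)).
  move=> p X q Y hY frX rX.
  have := hY r X (conj r_gt0 (conj frX rX)).
  rewrite /lat_slope /lat_deg ler_pdivrMr ?ltr0n // mul0r oppr_le0.
  by rewrite pmulr_lge0 // invr_gt0 ltr0n.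
rewrite ea; apply: ANA => //.
  exact: lnpos hB frG rG.
exact: lnpos hC frH rH.
Qed.
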